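(* Let $(G,c)$ be a colored DAG containing edges $ij$ and $kl$, and let $A\in\mathcal A_G(ij)$ and $B\in\mathcal A_G(kl)$. If $c(ij)=c(kl)$ then $\mathrm{ecr}_c(ij,kl;A,B)$ vanishes at every $\Sigma\in\mathcal M(G,c)$. If $c(ij)\neq c(kl)$, then $\mathrm{ecr}_c(ij,kl;A,B)$ does not vanish at a generic $\Sigma\in\mathcal M(G,c)$ (i.e. it vanishes only on a proper algebraic subset of $\mathcal M(G,c)$).
   Context: $G=(V,E)$ a DAG, $c:V\sqcup E\to C$ with $c(V)\cap c(E)=\emptyset$. $\mathcal M(G,c)$ is the set of $\phi_G(\Omega,\Lambda)=(I-\Lambda)^{-T}\Omega(I-\Lambda)^{-1}$ with $\Omega=\mathrm{diag}(\omega_i)$, $\omega_i>0$, $\lambda_{ij}=0$ for $ij\notin E$, $\omega_i=\omega_k$ when $c(i)=c(k)$, $\lambda_{ij}=\lambda_{kl}$ when $c(ij)=c(kl)$. With $\Sigma_{ij|K}$ the submatrix with rows $(i,K)$, columns $(j,K)$, let $\lambda_{ij|A}(\Sigma)=|\Sigma_{ij|A\setminus\{i\}}|/|\Sigma_A|$; $\mathcal A_G(ij)$ is the set of $A\subseteq V$ with $\lambda_{ij|A}(\phi_G(\Omega,\Lambda))=\lambda_{ij}$ for all parameters of the uncolored model. $\mathrm{ecr}_c(ij,kl;A,B)=|\Sigma_A|\,|\Sigma_B|\,(\lambda_{ij|A}(\Sigma)-\lambda_{kl|B}(\Sigma))$. *)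

(* Defs.v *)
From Stdlib Require Import Reals.
From mathcomp Require Import all_boot all_algebra.
From mathcomp Require Import Rstruct.
From mathcomp Require Import mpoly.

Set Implicit Arguments.
Unset Strict Implicit.
Unset Printing Implicit Defensive.

Import GRing.Theory Num.Theory.
Local Open Scope ring_scope.

(* It is a DAG iff it has no directed
   cycle: whenever i -> j is an edge, i is not reachable from j.
   (This also excludes self-loops.) *)
Definition is_DAG (n : nat) (e : rel 'I_n) : Prop :=
  forall i j : 'I_n, e i j -> ~~ connect e j i.

(* A coloring c : V ⊔ E -> C given by its vertex part cV and its edge part
   cE (only the values of cE on edges are relevant), with c(V) ∩ c(E) = ∅. *)
Definition is_coloring (n : nat) (e : rel 'I_n) (C : Type)
    (cV : 'I_n -> C) (cE : 'I_n -> 'I_n -> C) : Prop :=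
  forall v i j : 'I_n, e i j -> cV v <> cE i j.

Definition phiG (n : nat) (omega : 'rV[R]_n) (Lambda : 'M[R]_n) : 'M[R]_n :=
  invmx ((1%:M - Lambda)^T) *m diag_mx omega *m invmx (1%:M - Lambda).

Definition uncolored_params (n : nat) (e : rel 'I_n)
    (omega : 'rV[R]_n) (Lambda : 'M[R]_n) : Prop :=
  (forall i : 'I_n, 0 < omega 0 i) /\
  (forall i j : 'I_n, ~~ e i j -> Lambda i j = 0).

Definition colored_params (n : nat) (e : rel 'I_n) (C : Type)
    (cV : 'I_n -> C) (cE : 'I_n -> 'I_n -> C)
    (omega : 'rV[R]_n) (Lambda : 'M[R]_n) : Prop :=
  uncolored_params e omega Lambda /\
  (forall i k : 'I_n, cV i = cV k -> omega 0 i = omega 0 k) /\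
  (forall i j k l : 'I_n, e i j -> e k l -> cE i j = cE k l ->
      Lambda i j = Lambda k l).

Definition in_model (n : nat) (e : rel 'I_n) (C : Type)
    (cV : 'I_n -> C) (cE : 'I_n -> 'I_n -> C) (S : 'M[R]_n) : Prop :=
  exists (omega : 'rV[R]_n) (Lambda : 'M[R]_n),
    colored_params e cV cE omega Lambda /\ S = phiG omega Lambda.

(* Determinant of the submatrix of S with rows listed by r and columns
   listed by c (in the given orders); r and c are meant to have the same
   length (entries outside the range are 0). *)
Definition subdet (n : nat) (S : 'M[R]_n) (r c : seq 'I_n) : R :=
  \det (\matrix_(a < size r, b < size r)
          match nth None (map Some r) a, nth None (map Some c) b with
          | Some x, Some y => S x y
          | _, _ => 0
          end).

(* |Sigma_{ij|K}|: rows (i, K), columns (j, K), K listed in increasing order. *)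
Definition det_ijK (n : nat) (S : 'M[R]_n) (i j : 'I_n) (K : {set 'I_n}) : R :=
  subdet S (i :: enum K) (j :: enum K).

Definition det_A (n : nat) (S : 'M[R]_n) (A : {set 'I_n}) : R :=
  subdet S (enum A) (enum A).

Definition lambda_cond (n : nat) (S : 'M[R]_n) (i j : 'I_n) (A : {set 'I_n}) : R :=
  det_ijK S i j (A :\ i) / det_A S A.

Definition AG (n : nat) (e : rel 'I_n) (i j : 'I_n) (A : {set 'I_n}) : Prop :=
  forall (omega : 'rV[R]_n) (Lambda : 'M[R]_n),
    uncolored_params e omega Lambda ->
    lambda_cond (phiG omega Lambda) i j A = Lambda i j.

Definition ecr (n : nat) (i j k l : 'I_n) (A B : {set 'I_n}) (S : 'M[R]_n) : R :=
  det_A S A * det_A S B * (lambda_cond S i j A - lambda_cond S k l B).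

Definition mx_eval (n : nat) (p : {mpoly R[n * n]}) (S : 'M[R]_n) : R :=
  p.@[fun k => mxvec S 0 k].

Definition in_zero_set (n : nat) (ps : seq {mpoly R[n * n]}) (S : 'M[R]_n) : Prop :=
  forall p, p \in ps -> mx_eval p S = 0.

(* Main.v *)
Require Import Defs.
From Stdlib Require Import Reals.
From mathcomp Require Import all_boot all_algebra.
From mathcomp Require Import Rstruct.
From mathcomp Require Import mpoly.
From Stdlib Require Import ClassicalEpsilon.
From mathcomp Require Import ring.
Local Open Scope ring_scope.
Import GRing.Theory Num.Theory.

Definition subdetG {T : comNzRingType} {n : nat} (S : 'M[T]_n) (r c : seq 'I_n) : T :=
  \det (\matrix_(a < size r, b < size r)
          match nth None (map Some r) a, nth None (map Some c) b with
          | Some x, Some y => S x y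
          | _, _ => 0
          end).

Definition XS (n : nat) : 'M[{mpoly R[n * n]}]_n :=
  \matrix_(x, y) 'X_(mxvec_index x y).

Lemma eval_subdet (n : nat) (S : 'M[R]_n) r c :
  mx_eval (subdetG (XS n) r c) S = subdet S r c.
Proof.
rewrite /mx_eval /subdetG /subdet -det_map_mx; congr (\det _).
apply/matrixP=> a b; rewrite !mxE.
case: (nth None (map Some r) a) => [x|]; case: (nth None (map Some c) b) => [y|] //=;
  rewrite ?raddf0 // mxE mevalXU mxvecE //.
Qed.

Definition Ppoly {n : nat} (i j k l : 'I_n) (A B : {set 'I_n}) : {mpoly R[n * n]} :=
  let dA := subdetG (XS n) (enum A) (enum A) in
  let dB := subdetG (XS n) (enum B) (enum B) in
  let dijA := subdetG (XS n) (i :: enum (A :\ i)) (j :: enum (A :\ i)) in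
  let dklB := subdetG (XS n) (k :: enum (B :\ k)) (l :: enum (B :\ k)) in
  dA * dB * (dB * dijA - dA * dklB).

Lemma aux (F : fieldType) (a b u v : F) : a != 0 -> b != 0 ->
  b * u - a * v = a * b * (u / a - v / b).
Proof. move=> a0 b0; field; exact/andP. Qed.

Lemma aux2 (F : comNzRingType) (a b x : F) : a * b * (x - x) = 0.
Proof. by rewrite subrr mulr0. Qed.

Lemma aux3 (F : numFieldType) (a b : F) : a != 0 -> b != 0 -> a * b * (a * b * (1 - 2)) != 0.
Proof. move=> a0 b0; rewrite !mulf_neq0 // subr_eq0; apply/eqP => h.
have := eqr_nat F 1 2; by rewrite -h eqxx. Qed.

Lemma aux4 (F : numFieldType) (x y : F) : y != 0 -> x / 0 = y -> False.
Proof. by rewrite invr0 mulr0 => /eqP y0 h; apply: y0. Qed.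

Lemma eval_P (n : nat) (i j k l : 'I_n) (A B : {set 'I_n}) (S : 'M[R]_n) :
  mx_eval (Ppoly i j k l A B) S = det_A S A * det_A S B * ecr i j k l A B S.
Proof.
rewrite /mx_eval /Ppoly !(rmorphM, rmorphB) /=.
rewrite -!/(mx_eval _ S) !eval_subdet.
rewrite /ecr /lambda_cond /det_ijK -!/(det_A S _).
set a := det_A S A; set b := det_A S B.
have [->|a0] := eqVneq a 0; first by rewrite !mul0r.
have [->|b0] := eqVneq b 0; first by rewrite !(mulr0, mul0r).
congr (_ * _); exact: aux.
Qed.

Theorem proposition5p2 (n : nat) (e : rel 'I_n) (C : Type)
    (cV : 'I_n -> C) (cE : 'I_n -> 'I_n -> C)
    (HDAG : is_DAG e) (Hcol : is_coloring e cV cE)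
    (i j k l : 'I_n) (Hij : e i j) (Hkl : e k l)
    (A B : {set 'I_n}) (HA : AG e i j A) (HB : AG e k l B) :
  (cE i j = cE k l ->
     forall S : 'M[R]_n, in_model e cV cE S -> ecr i j k l A B S = 0) /\
  (cE i j <> cE k l ->
     exists ps : seq {mpoly R[n * n]},
       (forall S : 'M[R]_n, in_model e cV cE S -> ecr i j k l A B S = 0 ->
          in_zero_set ps S) /\
       (exists S : 'M[R]_n, in_model e cV cE S /\ ~ in_zero_set ps S)).
Proof.
split.
  move=> Hc S [om [La [[Hu [_ HL]] ->]]].
  by rewrite /ecr (HA _ _ Hu) (HB _ _ Hu) (HL _ _ _ _ Hij Hkl Hc); exact: aux2.
move=> Hc; exists [:: Ppoly i j k l A B]; split.
  move=> S _ He p; rewrite inE => /eqP ->.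
  by rewrite eval_P He mulr0.
pose La : 'M[R]_n := \matrix_(x, y)
  if e x y then
    (if excluded_middle_informative (cE x y = cE i j) then 1
     else if excluded_middle_informative (cE x y = cE k l) then 2 else 0)
  else 0.
pose om : 'rV[R]_n := const_mx 1.
have Hu : uncolored_params e om La.
  split; first by move=> x; rewrite mxE ltr01.
  by move=> x y /negbTE exy; rewrite mxE exy.
have Lij : La i j = 1.
  by rewrite mxE Hij; destruct (excluded_middle_informative _) as [h|h].
have Lkl : La k l = 2.
  rewrite mxE Hkl; destruct (excluded_middle_informative _) as [h|h].
    by exfalso; apply: Hc; rewrite h.
  by destruct (excluded_middle_informative _) as [h'|h'].
exists (phiG om La); split.
  exists om, La; split => //; split => //; split.
    by move=> x y _; rewrite !mxE.
  move=> x y x' y' exy exy' hc; rewrite !mxE exy exy' hc.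
  by [].
move=> /(_ (Ppoly i j k l A B)); rewrite inE eqxx => /(_ isT).
rewrite eval_P.
have hA := HA _ _ Hu; have hB := HB _ _ Hu.
have a0 : det_A (phiG om La) A != 0.
  apply/eqP=> h; move: hA; rewrite /lambda_cond h Lij; apply: aux4; exact: oner_neq0.
have b0 : det_A (phiG om La) B != 0.
  apply/eqP=> h; move: hB; rewrite /lambda_cond h Lkl; apply: aux4; by rewrite pnatr_eq0.
rewrite /ecr hA hB Lij Lkl => /eqP; apply/negP; apply: (@aux3 R); assumption.
Qed.
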